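(* Let $(X,d)$ be a metric space, let $k\ge 1$ and let $p_1,\dots,p_k\in X$ be arbitrary points. For $p\in X$ define $\mu_p(x,y)=d(x,y)+\sqrt{d(x,p)d(y,p)}$. Then for all $x,y,z\in X$, $$\prod_{i=1}^k\big(\mu_{p_i}(x,z)+\mu_{p_i}(y,z)\big)\leq 9^k\Big(\prod_{i=1}^k\mu_{p_i}(x,z)+\prod_{i=1}^k\mu_{p_i}(y,z)\Big).$$ *)

(* Defs.v *)
From mathcomp Require Import all_boot all_order all_algebra.
Set Implicit Arguments. Unset Strict Implicit. Unset Printing Implicit Defensive.
Import Order.TTheory GRing.Theory Num.Theory.
Local Open Scope ring_scope.

Definition is_metric (R : realFieldType) (T : Type) (d : T -> T -> R) : Prop :=
  [/\ forall x y, 0 <= d x y,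
      forall x y, d x y = 0 <-> x = y,
      forall x y, d x y = d y x
    & forall x y z, d x z <= d x y + d y z].

Definition mu (R : rcfType) (T : Type) (d : T -> T -> R) (p x y : T) : R :=
  d x y + Num.sqrt (d x p * d y p).

(* Main.v *)
Require Import Defs.
From mathcomp Require Import all_boot all_order all_algebra.
From mathcomp Require Import lra.
Import Order.TTheory GRing.Theory Num.Theory.
Local Open Scope ring_scope.

Lemma le_of_sq (R : rcfType) (s X : R) : 0 <= X -> s ^+ 2 <= X ^+ 2 -> s <= X.
Proof. move=> hX h; case: (lerP s X) => // hs; exfalso.
have : X ^+ 2 < s ^+ 2 by rewrite ltr_pXn2r // ?(le_lt_trans hX hs) //; exact: le_trans (ltW hs).
by rewrite ltNge h.
Qed.

Lemma key (R : rcfType) (T : Type) (d : T -> T -> R) (hd : is_metric d) (p x y z : T) :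
  d y z <= d x z -> mu d p y z <= 8 * mu d p x z.
Proof.
case: hd => h0 _ hs ht hE.
rewrite /mu; move: hE.
set D := d x z; set E := d y z; set u := d z p; set v := d x p; set w := d y p => hE.
have hu : 0 <= u by exact: h0. have hv : 0 <= v by exact: h0.
have hw : 0 <= w by exact: h0. have hD : 0 <= D by exact: h0.
have hEp : 0 <= E by exact: h0.
have hwu : w <= E + u by exact: (ht y z p).
have huv : u <= D + v by rewrite /D hs; exact: (ht z x p).
rewrite [w * u]mulrC [v * u]mulrC.
set s := Num.sqrt (u * w). set t := Num.sqrt (u * v).
have hs0 : 0 <= s by exact: sqrtr_ge0.
have ht0 : 0 <= t by exact: sqrtr_ge0.
have hs2 : s ^+ 2 = u * w by rewrite sqr_sqrtr // mulr_ge0.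
have ht2 : t ^+ 2 = u * v by rewrite sqr_sqrtr // mulr_ge0.
have h1 : s <= 2 * D + 2 * u.
  apply: le_of_sq; first nra.
  rewrite hs2.
  have : u * w <= u * (D + u) by apply: ler_wpM2l => //; lra.
  nra.
have h2 : u <= 2 * D + 2 * t.
  case: (lerP u (2 * D)) => hu2; first nra.
  have : u <= 2 * t by apply: le_of_sq; [nra| rewrite exprMn ht2; nra].
  nra.
nra.
Qed.

Lemma prod_bound (R : rcfType) (k : nat) (a b : 'I_k -> R) :
  (forall i, 0 <= a i) -> (forall i, 0 <= b i) -> (forall i, b i <= 8 * a i) ->
  \prod_(i < k) (a i + b i) <= 9 ^+ k * (\prod_(i < k) a i + \prod_(i < k) b i).
Proof.
move=> ha hb hab.
apply: (@le_trans _ _ (\prod_(i < k) (9 * a i))).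
  apply: ler_prod => i _; rewrite addr_ge0 //=; have := hab i; have := ha i; lra.
rewrite big_split /= prodr_const card_ord mulrDr lerDl.
by rewrite mulr_ge0 ?exprn_ge0 // prodr_ge0.
Qed.

Theorem lemma3p3 (R : rcfType) (T : Type) (d : T -> T -> R)
  (hd : is_metric d) (k : nat) (hk : (1 <= k)%N) (p : 'I_k -> T) (x y z : T) :
  \prod_(i < k) (mu d (p i) x z + mu d (p i) y z)
  <= 9 ^+ k * (\prod_(i < k) mu d (p i) x z + \prod_(i < k) mu d (p i) y z).
Proof.
have mu0 : forall q a, 0 <= mu d q a z.
  move=> q a; case: hd => h0 _ _ _; rewrite /mu addr_ge0 ?sqrtr_ge0 //.
case: (lerP (d y z) (d x z)) => hxy.
  by apply: prod_bound => // i; apply: key.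
rewrite addrC.
under eq_bigr do rewrite addrC.
by apply: prod_bound => // i; apply: key => //; exact: ltW.
Qed.
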